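(* Let $p$ be an odd prime, $q=p^m$, $q=et+1$ with integers $e\geq 2,t\geq 1$, $R_{e,q}=\mathbb{F}_q[u]/\langle u^e-1\rangle$ with orthogonal idempotents $\mu_1,\dots,\mu_e$ (see context), and assume $\gcd(n,q)=1$. Let $\mathcal{C}=\bigoplus_{i=1}^e\mu_i\mathcal{C}_i$ be a cyclic code of length $n$ over $R_{e,q}$, where $\mathcal{C}_i=\langle g_i(x)\rangle$ is a cyclic code of length $n$ over $\mathbb{F}_q$ with $g_i(x)$ a monic divisor of $x^n-1$, for $1\leq i\leq e$. Then $\mathcal{C}$ is an LCD code if and only if $g_i(x)$ is a self-reciprocal polynomial over $\mathbb{F}_q$ for every $1\leq i\leq e$.
   Context: Write $u^e-1=\prod_{i=1}^e(u-\alpha_i)$ over $\mathbb{F}_q$, $G_i=u-\alpha_i$, $\widehat{G}_i=(u^e-1)/G_i$, $z_iG_i+h_i\widehat{G}_i=1$, $\mu_i=h_i\widehat{G}_i$; these are pairwise orthogonal idempotents summing to $1$. For a linear code $\mathcal{C}\subseteq R_{e,q}^n$, $\mathcal{C}_i=\{s_i\in\mathbb{F}_q^n:\exists\, s_j\ (j\neq i)\text{ with }\sum_{j}s_j\mu_j\in\mathcal{C}\}$ and $\mathcal{C}=\bigoplus_i\mu_i\mathcal{C}_i$. A code is LCD if $\mathcal{C}\cap\mathcal{C}^\perp=\{0\}$ (Euclidean dual). A polynomial $g$ is self-reciprocal if $x^{\deg g}g(1/x)$ equals $g$ up to a nonzero scalar. *)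

(* Defs.v *)
From HB Require Import structures.
From mathcomp Require Import all_boot all_order all_algebra.
Set Implicit Arguments. Unset Strict Implicit. Unset Printing Implicit Defensive.
Import GRing.Theory.
Local Open Scope ring_scope.

Definition Rring (F : finFieldType) (e : nat) := {poly %/ ('X^e - 1 : {poly F})}.

Definition Gi (F : finFieldType) (e : nat) (alpha : 'I_e -> F) (i : 'I_e) : {poly F} :=
  'X - (alpha i)%:P.
Definition Ghat (F : finFieldType) (e : nat) (alpha : 'I_e -> F) (i : 'I_e) : {poly F} :=
  ('X^e - 1) %/ Gi alpha i.

Definition mu (F : finFieldType) (e : nat) (alpha : 'I_e -> F) (h : 'I_e -> {poly F})
  (i : 'I_e) : Rring F e := in_qpoly _ (h i * Ghat alpha i).

Definition cyclic_code (F : finFieldType) (n : nat) (g : {poly F}) : 'rV[F]_n -> Prop :=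
  fun s => exists a : {poly F}, rVpoly s = (a * g) %% ('X^n - 1).

Definition code_R (F : finFieldType) (e n : nat) (alpha : 'I_e -> F)
  (h : 'I_e -> {poly F}) (Ci : 'I_e -> 'rV[F]_n -> Prop) : 'rV[Rring F e]_n -> Prop :=
  fun x => exists s : 'I_e -> 'rV[F]_n, (forall i, Ci i (s i)) /\
     x = \sum_(i < e) (mu alpha h i) *: map_mx (fun c : F => c%:A : Rring F e) (s i).

Definition dotR (Rg : comNzRingType) (n : nat) (x y : 'rV[Rg]_n) : Rg :=
  \sum_(k < n) x 0 k * y 0 k.
Definition dual_code (Rg : comNzRingType) (n : nat) (C : 'rV[Rg]_n -> Prop) :
  'rV[Rg]_n -> Prop := fun y => forall x, C x -> dotR x y = 0.

Definition is_LCD (Rg : comNzRingType) (n : nat) (C : 'rV[Rg]_n -> Prop) : Prop :=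
  forall y, (C y /\ dual_code C y) <-> y = 0.

Definition reciprocal (F : fieldType) (g : {poly F}) : {poly F} :=
  \poly_(i < size g) g`_((size g).-1 - i).
Definition self_reciprocal (F : fieldType) (g : {poly F}) : Prop :=
  exists c : F, c != 0 /\ reciprocal g = c *: g.

(* Main.v *)
Require Import Defs.
From HB Require Import structures.
From mathcomp Require Import all_boot all_order all_algebra.
From mathcomp Require Import finfield separable.
From mathcomp Require Import zify.
Import GRing.Theory.
Local Open Scope ring_scope.

Set Implicit Arguments. Unset Strict Implicit. Unset Printing Implicit Defensive.


Definition Rv (F : fieldType) (d : nat) (P : {poly F}) : {poly F} :=
  \poly_(j < d.+1) P`_(d - j).

Lemma coef_Rv (F : fieldType) d (P : {poly F}) j :
  (Rv d P)`_j = if (j <= d)%N then P`_(d - j) else 0.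
Proof. by rewrite /Rv coef_poly ltnS. Qed.

Lemma size_Rv (F : fieldType) d (P : {poly F}) : (size (Rv d P) <= d.+1)%N.
Proof. exact: size_poly. Qed.

Lemma Rv_inv (F : fieldType) d (P : {poly F}) :
  (size P <= d.+1)%N -> Rv d (Rv d P) = P.
Proof.
move=> sP; apply/polyP=> j; rewrite !coef_Rv.
case: (leqP j d) => hj.
  by rewrite leq_subr subKn.
by rewrite nth_default //; apply: leq_trans sP _.
Qed.

Lemma RvD (F : fieldType) d (P Q : {poly F}) : Rv d (P + Q) = Rv d P + Rv d Q.
Proof. by apply/polyP=> j; rewrite coefD !coef_Rv coefD; case: ifP; rewrite ?addr0. Qed.

Lemma RvZ (F : fieldType) d c (P : {poly F}) : Rv d (c *: P) = c *: Rv d P.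
Proof. by apply/polyP=> j; rewrite coefZ !coef_Rv; case: ifP; rewrite ?coefZ ?mulr0. Qed.

Lemma Rv0 (F : fieldType) d : Rv d (0 : {poly F}) = 0.
Proof. by apply/polyP=> j; rewrite coef_Rv !coef0 if_same. Qed.

Lemma Rv_sum (F : fieldType) d (I : Type) (r : seq I) (Pr : pred I) (G : I -> {poly F}) :
  Rv d (\sum_(i <- r | Pr i) G i) = \sum_(i <- r | Pr i) Rv d (G i).
Proof. exact: (big_morph _ (RvD d) (Rv0 _ d)). Qed.

Lemma Rv_Xn (F : fieldType) d m : (m <= d)%N -> Rv d ('X^m : {poly F}) = 'X^(d - m).
Proof.
move=> hm; apply/polyP=> j; rewrite coef_Rv !coefXn.
case: (leqP j d) => hj.
  by congr (_%:R); apply/eqP/eqP; lia.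
by have -> : (j == (d - m)%N) = false by apply/eqP; lia.
Qed.

Lemma poly_expand (F : fieldType) a (P : {poly F}) :
  (size P <= a.+1)%N -> P = \sum_(i < a.+1) P`_i *: 'X^i.
Proof.
move=> sP; rewrite -poly_def; apply/polyP=> j; rewrite coef_poly.
by case: ltnP => // hj; rewrite nth_default //; apply: leq_trans sP hj.
Qed.

Lemma Rv_expand (F : fieldType) a (P : {poly F}) :
  (size P <= a.+1)%N -> Rv a P = \sum_(i < a.+1) P`_i *: 'X^(a - i).
Proof.
move=> sP; rewrite {1}(poly_expand sP) Rv_sum; apply: eq_bigr => i _.
by rewrite RvZ Rv_Xn // -ltnS.
Qed.

Lemma Rv_mul (F : fieldType) a b (P Q : {poly F}) :
  (size P <= a.+1)%N -> (size Q <= b.+1)%N ->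
  Rv (a + b) (P * Q) = Rv a P * Rv b Q.
Proof.
move=> sP sQ; rewrite (Rv_expand sP) (Rv_expand sQ).
rewrite {1}(poly_expand sP) {1}(poly_expand sQ).
rewrite mulr_suml Rv_sum mulr_suml; apply: eq_bigr => i _.
rewrite mulr_sumr Rv_sum mulr_sumr; apply: eq_bigr => j _.
rewrite -scalerAl -scalerAr scalerA -exprD RvZ -scalerAl -scalerAr scalerA -exprD.
rewrite Rv_Xn; last by have := ltn_ord i; have := ltn_ord j; lia.
congr (_ *: 'X^_); have := ltn_ord i; have := ltn_ord j; lia.
Qed.


Lemma Nneq0 (F : fieldType) k : ('X^(k.+1) - 1 : {poly F}) != 0.
Proof. by rewrite -size_poly_eq0 size_Xn_sub_1. Qed.

Lemma L1 (F : fieldType) k (P : {poly F}) :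
  (size P <= (k + k).+1)%N -> (P %% ('X^(k.+1) - 1))`_k = P`_k.
Proof.
move=> sP.
rewrite {2}(divp_eq P ('X^(k.+1) - 1)) coefD mulrBr mulr1 coefB coefMXn ltnSn sub0r.
have sq : (size ((P %/ ('X^(k.+1) - 1))%R) <= k)%N.
  by rewrite size_divp ?Nneq0 // size_Xn_sub_1 //= leq_subLR; apply: leq_trans sP _; rewrite addSn -addnS.
by rewrite (nth_default _ sq) oppr0 add0r.
Qed.

Definition dotF (F : fieldType) n (x y : 'rV[F]_n) : F := \sum_(k < n) x 0 k * y 0 k.

Lemma dot_coef (F : fieldType) k (x y : 'rV[F]_k.+1) :
  dotF x y = (rVpoly x * Rv k (rVpoly y))`_k.
Proof.
rewrite coefM /dotF; apply: eq_bigr => j _.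
rewrite coef_rVpoly_ord coef_Rv leq_subr subKn; last by rewrite -ltnS.
by rewrite coef_rVpoly_ord.
Qed.

Lemma size_rVpoly' (F : fieldType) n (x : 'rV[F]_n) : (size (rVpoly x) <= n)%N.
Proof. exact: size_poly. Qed.

Lemma code_mem (F : finFieldType) k (g : {poly F}) (y : 'rV[F]_k.+1) :
  g %| 'X^(k.+1) - 1 -> @cyclic_code F k.+1 g y <-> g %| rVpoly y.
Proof.
move=> gN; split.
  by case=> a ->; rewrite -(dvdp_mod _ gN) dvdp_mull.
case/dvdpP=> a ha; exists a; rewrite -ha modp_small //.
by rewrite size_Xn_sub_1 // ltnS size_rVpoly'.
Qed.

Lemma size_modN (F : fieldType) k (P : {poly F}) :
  (size ((P %% ('X^(k.+1) - 1))%R) <= k.+1)%N.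
Proof. by rewrite -ltnS -(size_Xn_sub_1 F (ltn0Sn k)) ltn_modp Nneq0. Qed.

Lemma natA a b k : (a <= k.+1 -> b <= k.+1 -> (a + b).-1 <= (k + k).+1)%N.
Proof. lia. Qed.
Lemma natB a k j : (a <= k.+1 -> j <= k -> ((k - j).+1 + a).-1 <= (k + k).+1)%N.
Proof. lia. Qed.

Lemma dual_mem (F : finFieldType) k (g : {poly F}) (y : 'rV[F]_k.+1) :
  (forall x, @cyclic_code F k.+1 g x -> dotF x y = 0) <->
  ('X^(k.+1) - 1 %| g * Rv k (rVpoly y)).
Proof.
set N := 'X^(k.+1) - 1; set Q := Rv k (rVpoly y).
have sQ : (size Q <= k.+1)%N by apply: size_Rv.
split; last first.
  move=> hN x [a ha]; rewrite dot_coef -/Q ha -L1; last first.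
    apply: leq_trans (size_mul_leq _ _) _.
    exact: natA (size_modN k (a * g)) sQ.
  rewrite mulrC modp_mul mulrC -mulrA modp_eq0 ?coef0 //.
  by apply: dvdp_mull; exact: hN.
move=> hx; apply/modp_eq0P.
set Rr := (g * Q) %% N.
have sR : (size Rr <= k.+1)%N by apply: size_modN.
apply/polyP=> j; rewrite coef0.
case: (leqP j k) => hj; last by rewrite nth_default //; apply: leq_trans sR hj.
pose x : 'rV[F]_k.+1 := poly_rV (('X^(k - j) * g) %% N).
have hxr : rVpoly x = ('X^(k - j) * g) %% N by rewrite poly_rV_K // size_modN.
have := hx x; rewrite dot_coef hxr -/Q -L1; last first.
  apply: leq_trans (size_mul_leq _ _) _.
  exact: natA (size_modN k _) sQ.
rewrite mulrC modp_mul mulrC -mulrA -modp_mul -/Rr L1; last first.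
  apply: leq_trans (size_mul_leq _ _) _; rewrite size_polyXn.
  exact: natB sR hj.
rewrite coefXnM.
rewrite ltnNge leq_subr /= subKn //.
by apply; exists 'X^(k - j).
Qed.


Lemma RvN (F : fieldType) d (P : {poly F}) : Rv d (- P) = - Rv d P.
Proof. by rewrite -scaleN1r RvZ scaleN1r. Qed.

Lemma Rv_N (F : fieldType) k : Rv k.+1 ('X^(k.+1) - 1 : {poly F}) = - ('X^(k.+1) - 1).
Proof.
rewrite RvD RvN Rv_Xn // subnn expr0 -(expr0 'X) Rv_Xn // subn0 expr0.
by rewrite opprB addrC.
Qed.

Lemma sepN (F : fieldType) k : (k.+1)%:R != 0 :> F ->
  coprimep ('X^(k.+1) - 1 : {poly F}) ('X^(k.+1) - 1)^`().
Proof.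
move=> nk; rewrite derivB derivXn -polyC1 derivC subr0 /= -scaler_nat coprimepZr; last first.
  by [].
apply: coprimep_expr; rewrite coprimepX rootE !hornerE expr0n /= sub0r oppr_eq0.
exact: oner_neq0.
Qed.

Lemma rVpoly_eq0 (F : fieldType) n (y : 'rV[F]_n) : rVpoly y = 0 -> y = 0.
Proof. by move=> h; rewrite -(rVpolyK y) h linear0. Qed.

Lemma n1 a b k : (a.+1 + b.+1).-1 = k.+2 -> k.+1 = (a + b)%N.
Proof. lia. Qed.
Lemma n2 s d k : ((s + d.+1).-1 <= k.+1)%N -> (s <= (k-d).+1)%N.
Proof. lia. Qed.
Lemma n3 s d k : ((s + d.+1).-1 <= k.+1)%N -> (0 < s)%N -> k = (k - d + d)%N.
Proof. lia. Qed.
Lemma n4 r d h k : (r <= (k-d).+1)%N -> k.+1 = (h + d)%N -> k = (k - d + d)%N -> (h.+1 <= r)%N -> False.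
Proof. lia. Qed.
Lemma n5 s : s != 0%N -> s != 1%N -> (1 < s)%N.
Proof. lia. Qed.
Lemma n6 sg sd : (1 < sd)%N -> (sd <= sg)%N -> (sg - sd.-1 != 0)%N.
Proof. lia. Qed.
Lemma n8 sg sd shs dg dh k : k.+1 = (dh + dg)%N -> (sd <= sg)%N -> (shs <= dh.+1)%N -> sg = dg.+1 -> (1 < sd)%N ->
  ((sg - sd.-1 + shs).-1 <= k.+1)%N.
Proof. lia. Qed.
Lemma n9 sg sd dg dh k : k.+1 = (dh + dg)%N -> sg = dg.+1 -> (1 < sd)%N -> (sd <= sg)%N -> k = (dh + (k - dh))%N.
Proof. lia. Qed.
Lemma n10 sg sd dg dh k : k.+1 = (dh + dg)%N -> sg = dg.+1 -> (1 < sd)%N -> (sd <= sg)%N -> (sg - sd.-1 <= (k - dh).+1)%N.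
Proof. lia. Qed.

Lemma F_main (F : finFieldType) k (g : {poly F}) :
  g \is monic -> g %| 'X^(k.+1) - 1 -> (k.+1)%:R != 0 :> F ->
  (forall y : 'rV[F]_k.+1, @cyclic_code F k.+1 g y ->
      (forall x, @cyclic_code F k.+1 g x -> dotF x y = 0) -> y = 0)
  <-> self_reciprocal g.
Proof.
move=> gm gN nk.
set N := 'X^(k.+1) - 1 : {poly F}.
have N0 : N != 0 by apply: Nneq0.
have g0 : g != 0 by apply: monic_neq0.
set h := N %/ g.
have hg : h * g = N by apply: divpK.
have h0 : h != 0 by apply: contra_neq N0 => h0; rewrite -hg h0 mul0r.
have cop : coprimep h g.
  have := sepN nk; rewrite -/N -hg.
  have -> : coprimep (h * g) (h * g)^`() = separable_poly (h * g) by rewrite unlock.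
  by rewrite separable_mul => /and3P[].
set dg := (size g).-1; set dh := (size h).-1.
have sg : size g = dg.+1 by rewrite prednK // size_poly_gt0.
have sh : size h = dh.+1 by rewrite prednK // size_poly_gt0.
have sN : size N = k.+2 by rewrite size_Xn_sub_1.
have kd : k.+1 = (dh + dg)%N.
  by apply: n1; rewrite -sh -sg -size_mul // hg.
set gs := Rv dg g; set hs := Rv dh h.
have key : hs * gs = - N by rewrite -Rv_mul ?sh ?sg // -kd hg Rv_N.
have gs0 : gs != 0 by apply: contra_neq N0 => e; apply/eqP; rewrite -oppr_eq0 -key e mulr0.
have hs0 : hs != 0 by apply: contra_neq N0 => e; apply/eqP; rewrite -oppr_eq0 -key e mul0r.
have recg : reciprocal g = gs by rewrite /reciprocal /gs /Rv sg.
split; last first.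
  case=> c [c0]; rewrite recg => hc y Cy Dy.
  move/(code_mem y gN): Cy; move/dual_mem: Dy => Dy Cy.
  apply: rVpoly_eq0; have [//|P0] := eqVneq (rVpoly y) 0; exfalso.
  case/dvdpP: Cy => a ha.
  have a0 : a != 0 by apply: contra_neq P0 => a0; rewrite ha a0 mul0r.
  have sP := size_rVpoly' y.
  have sa : (size a <= (k - dg).+1)%N.
    by apply: n2; move: sP; rewrite ha size_mul // sg.
  have kk : k = ((k - dg) + dg)%N.
    by apply: (n3 (s := size a)); [move: sP; rewrite ha size_mul // sg | rewrite size_poly_gt0].
  have RE : Rv k (a * g) = Rv (k - dg) a * gs by rewrite {1}kk Rv_mul // sg.
  move: Dy; rewrite ha RE hc -/N -hg.
  have -> : g * (Rv (k - dg) a * (c *: g)) = (c *: (Rv (k - dg) a * g)) * g.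
    by rewrite -!scalerAr -scalerAl mulrC.
  rewrite dvdp_mul2r // dvdpZr // Gauss_dvdpl //.
  have Ra0 : Rv (k - dg) a != 0.
    by apply: contra_neq a0 => e; rewrite -(Rv_inv sa) e Rv0.
  move/(dvdp_leq Ra0); rewrite sh.
  exact: n4 (size_Rv (k - dg) a) kd kk.
move=> lcd.
set d := gcdp g hs.
have cgh : coprimep g hs.
  case: (boolP (coprimep g hs)) => // ncop; exfalso.
  have d0 : size d != 0%N by rewrite size_poly_eq0 gcdp_eq0 negb_and g0.
  have d2 : (1 < size d)%N by apply: n5 => //; move: ncop; rewrite coprimep_def -/d.
  have dg_ : d %| g by apply: dvdp_gcdl.
  have dh_ : d %| hs by apply: dvdp_gcdr.
  have sdg : (size d <= size g)%N by apply: dvdp_leq.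
  have sdh : (size d <= size hs)%N by apply: dvdp_leq.
  have dd0 : d != 0 by rewrite -size_poly_eq0.
  have sgd : size (g %/ d) = (size g - (size d).-1)%N by rewrite size_divp.
  have shd : size (hs %/ d) = (size hs - (size d).-1)%N by rewrite size_divp.
  have gd0 : g %/ d != 0 by rewrite -size_poly_eq0 sgd; apply: n6.
  have hd0 : hs %/ d != 0 by rewrite -size_poly_eq0 shd; apply: n6.
  set P := g * (hs %/ d).
  have P0 : P != 0 by rewrite mulf_neq0.
  have PE : P = hs * (g %/ d).
    rewrite /P -{1}(divpK dg_) -{2}(divpK dh_).
    by rewrite mulrAC -mulrA mulrC.
  have shs := size_Rv dh h; rewrite -/hs in shs.
  have sPk : (size P <= k.+1)%N.
    rewrite PE; apply: leq_trans (size_mul_leq _ _) _.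
    by rewrite sgd addnC; apply: n8 kd sdg shs sg d2.
  pose y : 'rV[F]_k.+1 := poly_rV P.
  have yP : rVpoly y = P by rewrite poly_rV_K.
  have : y = 0.
    apply: lcd.
      by apply/(code_mem y gN); rewrite yP dvdp_mulr.
    apply/dual_mem; rewrite yP.
    have kk : k = (dh + (k - dh))%N.
      exact: n9 kd sg d2 sdg.
    have RE : Rv k (hs * (g %/ d)) = h * Rv (k - dh) (g %/ d).
      rewrite {1}kk Rv_mul //; last by rewrite sgd; apply: n10 kd sg d2 sdg.
      by rewrite Rv_inv ?sh.
    by rewrite PE RE mulrA (mulrC g) hg dvdp_mulr.
  move/(congr1 (@rVpoly _ _)); rewrite yP linear0 => P00.
  by rewrite P00 eqxx in P0.
have ggs : g %| gs.
  by rewrite -(Gauss_dvdpl _ cgh) mulrC key dvdpNr.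
have : g %= gs.
  rewrite -dvdp_size_eqp //; apply/eqP/anti_leq.
  by rewrite dvdp_leq //= sg; exact: size_Rv.
case/eqpP=> [[c1 c2]] /= /andP[c10 c20] e.
exists (c2^-1 * c1); split; first by rewrite mulf_neq0 ?invr_eq0.
by rewrite recg -scalerA e scalerA mulVf // scale1r.
Qed.


Lemma mk_monicM (F : finFieldType) e : (0 < e)%N ->
  mk_monic ('X^e - 1 : {poly F}) = 'X^e - 1.
Proof.
move=> e0; rewrite /mk_monic size_Xn_sub_1 // ltnS e0 /= -polyC1 monicXnsubC //.
Qed.

Definition ev (F : finFieldType) e (a : F) (r : Rring F e) : F := (r : {poly F}).[a].

Lemma ev_mod (F : finFieldType) e (a : F) (P : {poly F}) : (0 < e)%N ->
  ('X^e - 1 : {poly F}).[a] = 0 ->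
  (Pdiv.CommonRing.rmodp P (mk_monic ('X^e - 1 : {poly F}))).[a] = P.[a].
Proof.
move=> e0 Ma; rewrite mk_monicM //.
have mM : ('X^e - 1 : {poly F}) \is monic by rewrite -polyC1 monicXnsubC.
by rewrite {2}(Pdiv.RingMonic.rdivp_eq mM P) hornerD hornerM Ma mulr0 add0r.
Qed.

Lemma evD (F : finFieldType) e a (r s : Rring F e) : ev a (r + s) = ev a r + ev a s.
Proof. by rewrite /ev poly_of_qpolyD hornerD. Qed.

Lemma ev0 (F : finFieldType) e a : ev a (0 : Rring F e) = 0.
Proof. by rewrite /ev horner0. Qed.

Lemma ev_sum (F : finFieldType) e a (I : Type) (r : seq I) (Pr : pred I) (G : I -> Rring F e) :
  ev a (\sum_(i <- r | Pr i) G i) = \sum_(i <- r | Pr i) ev a (G i).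
Proof. exact: (big_morph _ (evD a) (ev0 _ a)). Qed.

Lemma evM (F : finFieldType) e a (r s : Rring F e) : (0 < e)%N ->
  ('X^e - 1 : {poly F}).[a] = 0 -> ev a (r * s) = ev a r * ev a s.
Proof. by move=> e0 Ma; rewrite /ev poly_of_qpolyM ev_mod // hornerM. Qed.

Lemma evA (F : finFieldType) e a (c : F) : (0 < e)%N -> ev a (c%:A : Rring F e) = c.
Proof.
move=> e0; rewrite /ev poly_of_qpolyZ hornerZ.
have -> : ((1 : Rring F e) : {poly F}) = 1 by [].
by rewrite hornerC mulr1.
Qed.

Lemma Gi_neq0 (F : finFieldType) e (alpha : 'I_e -> F) i : Gi alpha i != 0.
Proof. by rewrite /Gi polyXsubC_eq0. Qed.

Lemma Ghat_prod (F : finFieldType) e (alpha : 'I_e -> F)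
  (hprod : ('X^e - 1 : {poly F}) = \prod_(i < e) Gi alpha i) j :
  Ghat alpha j = \prod_(k < e | k != j) Gi alpha k.
Proof. by rewrite /Ghat hprod (bigD1 j) //= mulKp // Gi_neq0. Qed.

Lemma Ghat_eval (F : finFieldType) e (alpha : 'I_e -> F)
  (hprod : ('X^e - 1 : {poly F}) = \prod_(i < e) Gi alpha i) i j :
  (Ghat alpha j).[alpha i] = \prod_(k < e | k != j) (alpha i - alpha k).
Proof.
rewrite (Ghat_prod hprod) horner_prod; apply: eq_bigr => k _.
by rewrite /Gi hornerXsubC.
Qed.

Lemma Ma (F : finFieldType) e (alpha : 'I_e -> F)
  (hprod : ('X^e - 1 : {poly F}) = \prod_(i < e) Gi alpha i) i :
  ('X^e - 1 : {poly F}).[alpha i] = 0.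
Proof. by rewrite hprod horner_prod (bigD1 i) //= /Gi hornerXsubC subrr mul0r. Qed.

Lemma hG1 (F : finFieldType) e (alpha : 'I_e -> F) (z h : 'I_e -> {poly F})
  (hz : forall i, z i * Gi alpha i + h i * Ghat alpha i = 1) j :
  (h j).[alpha j] * (Ghat alpha j).[alpha j] = 1.
Proof.
have := congr1 (fun P => P.[alpha j]) (hz j) => /=.
by rewrite hornerD !hornerM /Gi hornerXsubC subrr mulr0 add0r hornerC.
Qed.

Lemma alpha_inj (F : finFieldType) e (alpha : 'I_e -> F) (z h : 'I_e -> {poly F})
  (hprod : ('X^e - 1 : {poly F}) = \prod_(i < e) Gi alpha i)
  (hz : forall i, z i * Gi alpha i + h i * Ghat alpha i = 1) : injective alpha.
Proof.
move=> i j eij; apply/eqP; case: (boolP (i == j)) => // nij.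
have := hG1 hz i; rewrite (Ghat_eval hprod) (bigD1 j) 1?eq_sym //= eij subrr mul0r mulr0.
by move/eqP; rewrite eq_sym oner_eq0.
Qed.

Lemma ev_mu (F : finFieldType) e (alpha : 'I_e -> F) (z h : 'I_e -> {poly F})
  (e0 : (0 < e)%N)
  (hprod : ('X^e - 1 : {poly F}) = \prod_(i < e) Gi alpha i)
  (hz : forall i, z i * Gi alpha i + h i * Ghat alpha i = 1) i j :
  ev (alpha i) (mu alpha h j) = (i == j)%:R.
Proof.
rewrite /ev /mu.
have -> : ((in_qpoly ('X^e - 1) (h j * Ghat alpha j)) : {poly F}) =
   Pdiv.CommonRing.rmodp (h j * Ghat alpha j) (mk_monic ('X^e - 1)) by [].
rewrite ev_mod // ?(Ma hprod) // hornerM.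
case: (eqVneq i j) => [->|nij]; first exact: hG1 hz j.
by rewrite (Ghat_eval hprod) (bigD1 i) //= subrr mul0r mulr0.
Qed.

Lemma ev_inj (F : finFieldType) e (alpha : 'I_e -> F) (z h : 'I_e -> {poly F})
  (e0 : (0 < e)%N)
  (hprod : ('X^e - 1 : {poly F}) = \prod_(i < e) Gi alpha i)
  (hz : forall i, z i * Gi alpha i + h i * Ghat alpha i = 1) (r : Rring F e) :
  (forall i, ev (alpha i) r = 0) -> r = 0.
Proof.
move=> hr; apply: val_inj => /=; apply/eqP; case: (boolP (_ == 0)) => // r0.
have := max_poly_roots r0 (rs := [seq alpha i | i <- enum 'I_e]).
rewrite size_map size_enum_ord map_inj_uniq ?enum_uniq; last exact: alpha_inj hz.
have -> : all (root (val r)) [seq alpha i | i <- enum 'I_e].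
  by apply/allP => x /mapP [i _ ->]; rewrite rootE; apply/eqP; exact: hr.
move=> /(_ isT isT).
have s2 : size (mk_monic ('X^e - 1 : {poly F})) = e.+1 by rewrite mk_monicM // size_Xn_sub_1.
have s1 := leq_trans (size_mk_monic r) (eq_leq s2).
by move=> b; have := leq_trans b s1; rewrite ltnn.
Qed.


Definition evv (F : finFieldType) e n (a : F) (x : 'rV[Rring F e]_n) : 'rV[F]_n :=
  map_mx (ev a) x.
Definition emb (F : finFieldType) e n (s : 'rV[F]_n) : 'rV[Rring F e]_n :=
  map_mx (fun c : F => c%:A : Rring F e) s.
Definition Sm (F : finFieldType) e n (alpha : 'I_e -> F) (h : 'I_e -> {poly F})
  (s : 'I_e -> 'rV[F]_n) : 'rV[Rring F e]_n :=
  \sum_(i < e) (mu alpha h i) *: emb e (s i).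

Lemma evN (F : finFieldType) e a (r : Rring F e) : ev a (- r) = - ev a r.
Proof.
by apply/eqP; rewrite -addr_eq0 -evD addNr ev0.
Qed.

Lemma code_R_Sm (F : finFieldType) e n (alpha : 'I_e -> F) (h : 'I_e -> {poly F})
  (Ci : 'I_e -> 'rV[F]_n -> Prop) x :
  code_R alpha h Ci x <-> exists2 s, (forall i, Ci i (s i)) & x = Sm alpha h s.
Proof. by split; [case=> s [H1 H2]; exists s | case=> s H1 H2; exists s]. Qed.

Lemma evv_Sm (F : finFieldType) e n (alpha : 'I_e -> F) (h : 'I_e -> {poly F})
  (HevM : forall i (r s : Rring F e), ev (alpha i) (r * s) = ev (alpha i) r * ev (alpha i) s)
  (HevA : forall i c, ev (alpha i) (c%:A : Rring F e) = c)
  (Hmu : forall i j, ev (alpha i) (mu alpha h j) = (i == j)%:R)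
  (s : 'I_e -> 'rV[F]_n) j :
  evv (alpha j) (Sm alpha h s) = s j.
Proof.
apply/matrixP => r k; rewrite /evv /Sm mxE summxE ev_sum.
rewrite (bigD1 j) //= big1 ?addr0.
  by rewrite !mxE HevM HevA Hmu eqxx mul1r.
by move=> i nij; rewrite !mxE HevM HevA Hmu eq_sym (negPf nij) mul0r.
Qed.

Lemma Sm_evv (F : finFieldType) e n (alpha : 'I_e -> F) (h : 'I_e -> {poly F})
  (HevM : forall i (r s : Rring F e), ev (alpha i) (r * s) = ev (alpha i) r * ev (alpha i) s)
  (HevA : forall i c, ev (alpha i) (c%:A : Rring F e) = c)
  (Hmu : forall i j, ev (alpha i) (mu alpha h j) = (i == j)%:R)
  (Hinj : forall r : Rring F e, (forall i, ev (alpha i) r = 0) -> r = 0)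
  (x : 'rV[Rring F e]_n) :
  Sm alpha h (fun i => evv (alpha i) x) = x.
Proof.
apply/matrixP => r k; apply/eqP; rewrite -subr_eq0; apply/eqP; apply: Hinj => i.
rewrite evD evN.
have := congr1 (fun M : 'rV[F]_n => M r k) (evv_Sm HevM HevA Hmu (fun i => evv (alpha i) x) i).
by rewrite /= {1}/evv mxE => ->; rewrite /evv mxE subrr.
Qed.

Lemma evv0 (F : finFieldType) e n a : evv a (0 : 'rV[Rring F e]_n) = 0.
Proof. by apply/matrixP => r k; rewrite !mxE ev0. Qed.

Lemma Sm0 (F : finFieldType) e n (alpha : 'I_e -> F) (h : 'I_e -> {poly F}) :
  Sm alpha h (fun _ => (0 : 'rV[F]_n)) = 0.
Proof.
rewrite /Sm big1 // => i _.
have -> : emb e (0 : 'rV[F]_n) = 0 by apply/matrixP => r k; rewrite !mxE scale0r.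
by rewrite scaler0.
Qed.

Lemma ev_dot (F : finFieldType) e n (alpha : 'I_e -> F)
  (HevM : forall i (r s : Rring F e), ev (alpha i) (r * s) = ev (alpha i) r * ev (alpha i) s)
  i (x y : 'rV[Rring F e]_n) :
  ev (alpha i) (dotR x y) = dotF (evv (alpha i) x) (evv (alpha i) y).
Proof.
rewrite /dotR /dotF ev_sum; apply: eq_bigr => k _.
by rewrite HevM !mxE.
Qed.


Lemma dotF0 (F : finFieldType) n (c : 'rV[F]_n) : dotF c 0 = 0.
Proof. by rewrite /dotF big1 // => k _; rewrite mxE mulr0. Qed.

Lemma LCD_transfer (F : finFieldType) e n (alpha : 'I_e -> F) (h : 'I_e -> {poly F})
  (HevM : forall i (r s : Rring F e), ev (alpha i) (r * s) = ev (alpha i) r * ev (alpha i) s)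
  (HevA : forall i c, ev (alpha i) (c%:A : Rring F e) = c)
  (Hmu : forall i j, ev (alpha i) (mu alpha h j) = (i == j)%:R)
  (Hinj : forall r : Rring F e, (forall i, ev (alpha i) r = 0) -> r = 0)
  (Ci : 'I_e -> 'rV[F]_n -> Prop) (HC0 : forall i, Ci i 0) :
  is_LCD (code_R alpha h Ci) <->
  forall i, (forall y, Ci i y -> (forall c, Ci i c -> dotF c y = 0) -> y = 0).
Proof.
have codeP : forall x, code_R alpha h Ci x <-> forall i, Ci i (evv (alpha i) x).
  move=> x; rewrite code_R_Sm; split.
    by case=> s Hs -> i; rewrite (evv_Sm HevM HevA Hmu).
  by move=> H; exists (fun i => evv (alpha i) x) => //; rewrite (Sm_evv HevM HevA Hmu Hinj).
have dualP : forall y, dual_code (code_R alpha h Ci) y <->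
    forall i c, Ci i c -> dotF c (evv (alpha i) y) = 0.
  move=> y; split.
    move=> Dy i c Cc.
    pose X := Sm alpha h (fun j => if j == i then c else 0).
    have CX : code_R alpha h Ci X.
      apply/code_R_Sm; exists (fun j => if j == i then c else 0) => // j.
      by case: eqP => [->|_]; [exact: Cc | exact: HC0].
    have := congr1 (ev (alpha i)) (Dy X CX).
    by rewrite ev0 (ev_dot HevM) /X (evv_Sm HevM HevA Hmu) eqxx.
  move=> H x Cx; apply: Hinj => i; rewrite (ev_dot HevM); apply: H.
  by move/codeP: Cx.
split.
  move=> H i y Cy Dy.
  pose s := fun j => if j == i then y else 0.
  have : Sm alpha h s = 0.
    apply/H; split.
      apply/code_R_Sm; exists s => // j; rewrite /s.
      by case: eqP => [->|_]; [exact: Cy | exact: HC0].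
    apply/dualP => j c Cc; rewrite (evv_Sm HevM HevA Hmu) /s.
    by case: eqP => [ji|_]; [subst j; exact: Dy | exact: dotF0].
  move/(congr1 (evv (alpha i))); rewrite (evv_Sm HevM HevA Hmu) evv0 /s eqxx.
  by [].
move=> H y; split.
  case=> /codeP Cy /dualP Dy.
  rewrite -(Sm_evv HevM HevA Hmu Hinj y).
  have -> : Sm alpha h (fun i => evv (alpha i) y) = Sm alpha h (fun _ => 0).
    by rewrite /Sm; apply: eq_bigr => i _; rewrite (H i _ (Cy i) (Dy i)).
  exact: Sm0.
move=> ->; split.
  by apply/code_R_Sm; exists (fun _ => 0) => //; rewrite Sm0.
by move=> x _; rewrite /dotR big1 // => k _; rewrite mxE mulr0.
Qed.


Unset Implicit Arguments.

Theorem corollary4p6 (F : finFieldType) (p m e t n : nat)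
  (alpha : 'I_e -> F) (z h : 'I_e -> {poly F}) (g : 'I_e -> {poly F}) :
  prime p -> odd p -> #|F| = (p ^ m)%N ->
  (2 <= e)%N -> (1 <= t)%N -> (p ^ m = e * t + 1)%N ->
  coprime n (p ^ m) ->
  ('X^e - 1 : {poly F}) = \prod_(i < e) Gi alpha i ->
  (forall i, z i * Gi alpha i + h i * Ghat alpha i = 1) ->
  (forall i, g i \is monic /\ g i %| 'X^n - 1) ->
  (is_LCD (code_R alpha h (fun i => @cyclic_code F n (g i)))
   <-> forall i, self_reciprocal (g i)).
Proof.
move=> pp _ cardF e2 t1 pme cop hprod hz hg.
have e0 : (0 < e)%N by apply: leq_trans e2.
have HevM : forall i (r s : Rring F e), ev (alpha i) (r * s) = ev (alpha i) r * ev (alpha i) s.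
  by move=> i r s; apply: evM => //; exact: Ma hprod i.
have HevA : forall i c, ev (alpha i) (c%:A : Rring F e) = c.
  by move=> i c; apply: evA.
have Hmu := ev_mu e0 hprod hz.
have Hinj := ev_inj e0 hprod hz.
have pm3 : (2 < p ^ m)%N.
  by rewrite pme addn1 ltnS; apply: leq_trans e2 _; rewrite leq_pmulr.
rewrite (LCD_transfer HevM HevA Hmu Hinj); last first.
  by move=> i; exists 0; rewrite linear0 mul0r mod0p.
case: n cop hg => [|k] cop hg.
  by move: cop; rewrite /coprime gcd0n => /eqP pm1; rewrite pm1 in pm3.
have m0 : (0 < m)%N by case: m pm3 {pme cop cardF} => //; rewrite expn0.
have nk : (k.+1)%:R != 0 :> F.
  rewrite -(dvdn_pcharf (card_finPcharP cardF pp)) -prime_coprime // coprime_sym.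
  by rewrite -(coprime_pexpr _ _ m0).
split=> H i.
  by apply/(F_main (hg i).1 (hg i).2 nk); exact: H.
by apply/(F_main (hg i).1 (hg i).2 nk); exact: H.
Qed.
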